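(* Let $H$ be a complex Hilbert space and $V=\mathcal{L}(H)_{sa}$. Let $a\neq0$ be a projection in $V$ and $u$ a tripotent in $V_{1/2}(a)$ with $a\circ u^2=a$. Let $\gamma_{a,u}(t)=[\exp tG(a,u)]a$ be the geodesic with $\gamma(0)=a$, $\dot\gamma(0)=u$. Then $\gamma_{a,u}(\mathbb{R})\subset V[a,u]$ (the subalgebra generated by $a,u$), and more precisely $$\gamma_{a,u}(t)=(\cos^2t)\,a+(\tfrac12\sin2t)\,u+(\sin^2t)\,u^{(2)},\qquad t\in\mathbb{R},$$ where $u^{(2)}=\{uau\}$.
   Context: $V$ is the set of self-adjoint bounded operators on $H$, a real Jordan algebra with product $x\circ y=\frac12(xy+yx)$ and unit $\mathbf 1$; $u^2=u\circ u$. The triple product is $\{xyz\}=\frac12(xyz+zyx)$ and $(x\square y)z=\{xyz\}$. A projection is $a=a^2=a^*$; a tripotent is $u$ with $\{uuu\}=u$. $V_{1/2}(a)=\{x\in V: a\circ x=\frac12x\}$. For $u\in V_{1/2}(a)$, $G(a,u)=2(u\square a-a\square u)$, a bounded operator on $V$; the curves $t\mapsto[\exp tG(a,u)]a$ are the geodesics through $a$ of the natural affine connection on the manifold of projections. *)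

(* Defs.v *)
From HB Require Import structures.
From mathcomp Require Import all_boot all_order all_algebra.
From mathcomp Require Import reals trigo.
From mathcomp Require Import complex.
Set Implicit Arguments. Unset Strict Implicit. Unset Printing Implicit Defensive.
Import Order.TTheory GRing.Theory Num.Theory.
Local Open Scope ring_scope.
Local Open Scope complex_scope.

Section Hilbert.
Variables (R : realType) (H : lmodType R[i]) (ip : H -> H -> R[i]).

Definition hnorm (x : H) : R := Num.sqrt (complex.Re (ip x x)).

Definition is_hilbert : Prop :=
  [/\ (forall (c : R[i]) (x y z : H), ip (c *: x + y) z = c * ip x z + ip y z),
      (forall x y : H, ip y x = conjc (ip x y)),
      (forall x : H, 0 <= ip x x),
      (forall x : H, ip x x = 0 -> x = 0) &
      (forall s : nat -> H,
          (forall e : R, 0 < e -> exists N : nat,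
             forall m n : nat, (N <= m)%N -> (N <= n)%N -> hnorm (s m - s n) < e) ->
          exists l : H, forall e : R, 0 < e -> exists N : nat,
             forall n : nat, (N <= n)%N -> hnorm (s n - l) < e)].

(* operators on H are functions H -> H; L(H) = bounded C-linear ones *)
Definition bounded_op (T : H -> H) : Prop :=
  (forall (c : R[i]) (x y : H), T (c *: x + y) = c *: T x + T y) /\
  exists M : R, forall x : H, hnorm (T x) <= M * hnorm x.

Definition self_adjoint (T : H -> H) : Prop :=
  forall x y : H, ip (T x) y = ip x (T y).

Definition in_V (T : H -> H) : Prop := bounded_op T /\ self_adjoint T.

Definition op_add (S T : H -> H) : H -> H := fun h => S h + T h.
Definition op_scale (r : R) (T : H -> H) : H -> H := fun h => r%:C *: T h.

Definition jprod (x y : H -> H) : H -> H :=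
  fun h => (2^-1 : R)%:C *: (x (y h) + y (x h)).
Definition jtriple (x y z : H -> H) : H -> H :=
  fun h => (2^-1 : R)%:C *: (x (y (z h)) + z (y (x h))).

Definition is_projection (a : H -> H) : Prop := in_V a /\ jprod a a = a.
Definition is_tripotent (u : H -> H) : Prop := in_V u /\ jtriple u u u = u.

Definition in_V_half (a x : H -> H) : Prop :=
  in_V x /\ jprod a x = op_scale (2^-1) x.

(* G(a,u) = 2 (u [] a - a [] u), acting on V *)
Definition Gop (a u : H -> H) (x : H -> H) : H -> H :=
  op_scale 2 (op_add (jtriple u a x) (op_scale (-1) (jtriple a u x))).

Fixpoint Gpow (a u : H -> H) (n : nat) : H -> H :=
  match n with 0 => a | n'.+1 => Gop a u (Gpow a u n') end.

Definition exp_partial (a u : H -> H) (t : R) (n : nat) : H -> H :=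
  fun h => \sum_(k < n) ((t ^+ k / (k`!)%:R)%:C *: Gpow a u k h).

(* convergence in the operator norm (the norm of V) *)
Definition op_cvg (S : nat -> H -> H) (L : H -> H) : Prop :=
  forall e : R, 0 < e -> exists N : nat, forall n : nat, (N <= n)%N ->
    forall h : H, hnorm (S n h - L h) <= e * hnorm h.

(* [exp tG(a,u)] a, defined as the (operator-norm) sum of the exponential
   series applied to a *)
Definition geodesic_at (a u : H -> H) (t : R) (g : H -> H) : Prop :=
  op_cvg (exp_partial a u t) g.

(* V[a,u]: the (real) Jordan subalgebra of V generated by a and u, i.e. the
   intersection of all sets of operators containing a, u and closed under
   sums, real scalar multiples and the Jordan product *)
Definition jordan_closed (S : (H -> H) -> Prop) : Prop :=
  (forall x y, S x -> S y -> S (op_add x y)) /\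
  (forall (r : R) x, S x -> S (op_scale r x)) /\
  (forall x y, S x -> S y -> S (jprod x y)).

Definition in_subalg (a u x : H -> H) : Prop :=
  forall S : (H -> H) -> Prop, jordan_closed S -> S a -> S u -> S x.

End Hilbert.

(* Main.v *)
Require Import Defs.
From HB Require Import structures.
From mathcomp Require Import all_boot all_order all_algebra.
From mathcomp Require Import reals trigo.
From mathcomp Require Import complex.
From mathcomp Require Import classical_sets boolp topology normedtype sequences.
From mathcomp Require Import ring lra zify.
From Stdlib Require Import FunctionalExtensionality.
Import Order.TTheory GRing.Theory Num.Theory.
Import numFieldNormedType.Exports.
Set Implicit Arguments. Unset Strict Implicit. Unset Printing Implicit Defensive.
Local Open Scope ring_scope.
Local Open Scope complex_scope.

Section Lin.
Variables (R : realType) (H : lmodType R[i]).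

Definition islin (f : H -> H) := forall (c : R[i]) x y, f (c *: x + y) = c *: f x + f y.

Lemma lin0 f : islin f -> f 0 = 0.
Proof.
move=> hf; have h := hf 1 0 0; rewrite !scale1r addr0 in h.
by apply: (addrI (f 0)); rewrite addr0 -h.
Qed.
Lemma linD f : islin f -> forall x y, f (x + y) = f x + f y.
Proof. by move=> hf x y; have := hf 1 x y; rewrite !scale1r. Qed.
Lemma linZ f : islin f -> forall c x, f (c *: x) = c *: f x.
Proof. move=> hf c x; have := hf c x 0; rewrite !addr0 (lin0 hf) addr0. done. Qed.
Lemma linN f : islin f -> forall x, f (- x) = - f x.
Proof. by move=> hf x; rewrite -scaleN1r linZ // scaleN1r. Qed.
Lemma linB f : islin f -> forall x y, f (x - y) = f x - f y.
Proof. by move=> hf x y; rewrite linD // linN. Qed.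

Definition nf (v1 v2 v3 v4 : H) (c1 c2 c3 c4 : R[i]) :=
  c1 *: v1 + c2 *: v2 + c3 *: v3 + c4 *: v4.

Lemma nfD v1 v2 v3 v4 a1 b1 c1 d1 a2 b2 c2 d2 :
  nf v1 v2 v3 v4 a1 b1 c1 d1 + nf v1 v2 v3 v4 a2 b2 c2 d2 =
  nf v1 v2 v3 v4 (a1 + a2) (b1 + b2) (c1 + c2) (d1 + d2).
Proof.
rewrite /nf !scalerDl.
rewrite addrACA; congr (_ + _); rewrite addrACA; congr (_ + _).
by rewrite addrACA.
Qed.
Lemma nfZ v1 v2 v3 v4 k c1 c2 c3 c4 :
  k *: nf v1 v2 v3 v4 c1 c2 c3 c4 = nf v1 v2 v3 v4 (k * c1) (k * c2) (k * c3) (k * c4).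
Proof. by rewrite /nf !scalerDr !scalerA. Qed.
Lemma nfN v1 v2 v3 v4 c1 c2 c3 c4 :
  - nf v1 v2 v3 v4 c1 c2 c3 c4 = nf v1 v2 v3 v4 (- c1) (- c2) (- c3) (- c4).
Proof. by rewrite -scaleN1r nfZ !mulN1r. Qed.
Lemma nfB v1 v2 v3 v4 a1 b1 c1 d1 a2 b2 c2 d2 :
  nf v1 v2 v3 v4 a1 b1 c1 d1 - nf v1 v2 v3 v4 a2 b2 c2 d2 =
  nf v1 v2 v3 v4 (a1 - a2) (b1 - b2) (c1 - c2) (d1 - d2).
Proof. by rewrite nfN nfD. Qed.
Lemma nf1 v1 v2 v3 v4 : v1 = nf v1 v2 v3 v4 1 0 0 0.
Proof. by rewrite /nf !scale0r !addr0 scale1r. Qed.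
Lemma nf2 v1 v2 v3 v4 : v2 = nf v1 v2 v3 v4 0 1 0 0.
Proof. by rewrite /nf !scale0r !addr0 add0r scale1r. Qed.
Lemma nf3 v1 v2 v3 v4 : v3 = nf v1 v2 v3 v4 0 0 1 0.
Proof. by rewrite /nf !scale0r !addr0 !add0r scale1r. Qed.
Lemma nf4 v1 v2 v3 v4 : v4 = nf v1 v2 v3 v4 0 0 0 1.
Proof. by rewrite /nf !scale0r !add0r scale1r. Qed.
Lemma nf0 v1 v2 v3 v4 : 0 = nf v1 v2 v3 v4 0 0 0 0.
Proof. by rewrite /nf !scale0r !add0r. Qed.

Lemma rcD (x y : R) : (x + y)%:C = x%:C + y%:C :> R[i]. Proof. exact: rmorphD. Qed.
Lemma rcB (x y : R) : (x - y)%:C = x%:C - y%:C :> R[i]. Proof. exact: rmorphB. Qed.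
Lemma rcN (x : R) : (- x)%:C = - x%:C :> R[i]. Proof. exact: rmorphN. Qed.
Lemma rcM (x y : R) : (x * y)%:C = x%:C * y%:C :> R[i]. Proof. exact: rmorphM. Qed.
Lemma rcn n : (n%:R : R)%:C = n%:R :> R[i]. Proof. exact: rmorph_nat. Qed.
Lemma rc2 : (2 : R)%:C = 2 :> R[i]. Proof. exact: rmorph_nat. Qed.
Lemma rc1 : (1 : R)%:C = 1 :> R[i]. Proof. exact: rmorph1. Qed.
Lemma rc0 : (0 : R)%:C = 0 :> R[i]. Proof. exact: rmorph0. Qed.

Lemma pm1 (c d : R) (v w : H) : c = 1 -> d = -1 -> c%:C *: v + d%:C *: w = v - w.
Proof. by move=> -> ->; rewrite rc1 rcN rc1 scale1r scaleN1r. Qed.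
End Lin.

Section Alg.
Variables (R : realType) (H : lmodType R[i]) (a u : H -> H).
Hypotheses (la : islin a) (lu : islin u).
Hypothesis F1 : forall x, a (a x) = a x.
Hypothesis F2 : forall x, a (u x) + u (a x) = u x.
Hypothesis F3 : forall x, u (u (u x)) = u x.
Hypothesis F4 : forall x, a (u (u x)) + u (u (a x)) = a x *+ 2.

Lemma ua x : u (a x) = u x - a (u x).
Proof. by apply/eqP; rewrite eq_sym subr_eq [u (a x) + _]addrC F2. Qed.

Lemma uua x : u (u (a x)) = a (u (u x)).
Proof.
by rewrite ua (linB lu) ua opprB addrC subrK.
Qed.

Lemma auu x : a (u (u x)) = a x.
Proof.
have h := F4 x; rewrite uua in h.
have h2 : (2%:R : R[i]) != 0 by rewrite pnatr_eq0.
apply: (scalerI h2); rewrite !scaler_nat -h.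
by rewrite mulr2n.
Qed.

Lemma Gop_eq x h : Gop a u x h = u (a (x h)) + x (a (u h)) - (a (u (x h)) + x (u (a h))).
Proof.
rewrite /Gop /op_scale /op_add /jtriple.
rewrite scalerDr !scalerA -!rcM.
apply: pm1; by field.
Qed.

Definition comb (al be de : R) : H -> H :=
  fun h => al%:C *: a h + be%:C *: u h + de%:C *: u (u h).

Lemma Gcomb al be de h : Gop a u (comb al be de) h = comb (- (4 * be)) al (2 * be) h.
Proof.
rewrite Gop_eq /comb.
rewrite ?(linD la, linD lu, linZ la, linZ lu, linB la, linB lu, linN la, linN lu, F1, ua, auu, F3).
have [L eL] : {L | L = nf (a h) (u h) (a (u h)) (u (u h))} by exists (nf (a h) (u h) (a (u h)) (u (u h))).
have e1 : a h = L 1 0 0 0 by rewrite eL -nf1.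
have e2 : u h = L 0 1 0 0 by rewrite eL -nf2.
have e3 : a (u h) = L 0 0 1 0 by rewrite eL -nf3.
have e4 : u (u h) = L 0 0 0 1 by rewrite eL -nf4.
rewrite e4 e3 e2 e1 eL.
rewrite ?(nfD, nfB, nfZ, nfN).
congr nf; rewrite ?(rcM, rcN, rcD, rcB, rcn); ring.
Qed.

End Alg.

Section Norm.
Variables (R : realType) (H : lmodType R[i]) (ip : H -> H -> R[i]).
Hypothesis iplin : forall (c : R[i]) (x y z : H), ip (c *: x + y) z = c * ip x z + ip y z.
Hypothesis ipsym : forall x y : H, ip y x = conjc (ip x y).
Hypothesis ippos : forall x : H, 0 <= ip x x.

Definition NN (x : H) : R := complex.Re (ip x x).

Lemma ip0l z : ip 0 z = 0.
Proof.
have h := iplin 1 0 0 z; rewrite scale1r addr0 mul1r in h.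
by apply: (addrI (ip 0 z)); rewrite addr0 -h.
Qed.
Lemma ipDl x y z : ip (x + y) z = ip x z + ip y z.
Proof. by have := iplin 1 x y z; rewrite scale1r mul1r. Qed.
Lemma ipZl c x z : ip (c *: x) z = c * ip x z.
Proof. by have := iplin c x 0 z; rewrite addr0 ip0l addr0. Qed.
Lemma ipDr x y z : ip z (x + y) = ip z x + ip z y.
Proof. rewrite (ipsym (x + y)) (ipsym x) (ipsym y) ipDl; exact: rmorphD. Qed.
Lemma ipZr c x z : ip z (c *: x) = conjc c * ip z x.
Proof. rewrite (ipsym (c *: x)) (ipsym x) ipZl; exact: rmorphM. Qed.
Lemma ipNl x z : ip (- x) z = - ip x z.
Proof. by rewrite -scaleN1r ipZl mulN1r. Qed.
Lemma ipNr x z : ip z (- x) = - ip z x.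
Proof.
rewrite -scaleN1r ipZr.
have -> : ((-1 : R[i])^*)%C = -1 by apply/eqP; rewrite eq_complex /= !oppr0 !eqxx.
by rewrite mulN1r. Qed.

Lemma ipxx x : ip x x = (NN x)%:C.
Proof.
have h := ippos x.
by rewrite [LHS]complexE (ger0_Im h) mulr0 addr0.
Qed.

Lemma NN_ge0 x : 0 <= NN x.
Proof. by have := ippos x; rewrite lecE => /andP[_ ->]. Qed.

Lemma NNZ r x : NN (r%:C *: x) = r ^+ 2 * NN x.
Proof.
apply: complexI; rewrite -ipxx ipZl ipZr conjc_real ipxx.
by rewrite expr2 !rmorphM mulrA.
Qed.

Lemma NND x y : NN (x + y) <= 2 * NN x + 2 * NN y.
Proof.
have e : ip (x + y) (x + y) + ip (x - y) (x - y) = 2 * ip x x + 2 * ip y y.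
  rewrite !ipDl !ipDr !ipNl !ipNr; ring.
have e' : NN (x + y) + NN (x - y) = 2 * NN x + 2 * NN y.
  by apply: complexI; rewrite !rcD !rcM rc2 -!ipxx e.
have := NN_ge0 (x - y); lra.
Qed.

Lemma NN3 c1 c2 c3 v1 v2 v3 :
  NN (c1%:C *: v1 + c2%:C *: v2 + c3%:C *: v3) <=
  4 * (c1 ^+ 2 * NN v1 + c2 ^+ 2 * NN v2 + c3 ^+ 2 * NN v3).
Proof.
have h1 := NND (c1%:C *: v1 + c2%:C *: v2) (c3%:C *: v3).
have h2 := NND (c1%:C *: v1) (c2%:C *: v2).
rewrite !NNZ in h1 h2.
have := NN_ge0 v1; have := NN_ge0 v2; have := NN_ge0 v3.
have := sqr_ge0 c1; have := sqr_ge0 c2; have := sqr_ge0 c3.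
nra.
Qed.
End Norm.

Lemma cos_lim (R : realType) (x : R) (e : R) : 0 < e ->
  exists N, forall n, (N <= n)%N -> `| cos x - \sum_(k < n) cos_coeff x k | < e.
Proof.
move=> e0.
have hc := @is_cvg_series_cos_coeff R x.
have hcx : cos x = limn (series (cos_coeff x)) by rewrite unlock.
have := @cvgr_dist_lt _ _ _ _ _ _ _ hc _ e0.
rewrite -hcx.
move=> [N _ HN]; exists N => n Hn.
have := HN n Hn. rewrite /series /= big_mkord. done.
Qed.
Lemma sin_lim (R : realType) (x : R) (e : R) : 0 < e ->
  exists N, forall n, (N <= n)%N -> `| sin x - \sum_(k < n) sin_coeff x k | < e.
Proof.
move=> e0.
have hc := @is_cvg_series_sin_coeff R x.
have hcx : sin x = limn (series (sin_coeff x)) by rewrite unlock.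
have := @cvgr_dist_lt _ _ _ _ _ _ _ hc _ e0.
rewrite -hcx.
move=> [N _ HN]; exists N => n Hn.
have := HN n Hn. rewrite /series /= big_mkord. done.
Qed.

Section Coef.
Variable R : realType.
Definition cx k : R := (~~ odd k)%:R * (-1) ^+ k./2 * 2 ^+ k.
Definition cy k : R := (odd k)%:R * (-1) ^+ k.-1./2 * 2 ^+ k / 2.
Definition cd k : R := ((k == 0)%:R - cx k) / 2.

Lemma nat_parity k : (exists m, k = m.*2) \/ (exists m, k = m.*2.+1).
Proof.
rewrite -[k](odd_double_half k); case: (odd k) => /=.
  by right; exists k./2.
by left; exists k./2; rewrite add0n.
Qed.

Lemma two_neq0 : (2 : R) != 0. Proof. by rewrite pnatr_eq0. Qed.

Lemma cx_rec k : cx k.+1 = - (4 * cy k).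
Proof.
rewrite /cx /cy; case: (nat_parity k) => [[m ->]|[m ->]] /=;
  rewrite ?odd_double ?doubleK ?uphalf_double /=.
  by rewrite !mul0r mulr0 oppr0.
rewrite !mul1r !exprS.
by field.
Qed.

Lemma cy_rec k : cy k.+1 = cx k.
Proof.
rewrite /cx /cy; case: (nat_parity k) => [[m ->]|[m ->]] /=;
  rewrite ?odd_double ?doubleK ?uphalf_double /=.
  rewrite !mul1r exprS. by field.
by rewrite !mul0r.
Qed.

Lemma cd_rec k : cd k.+1 = 2 * cy k.
Proof.
rewrite /cd cx_rec /=. by field.
Qed.

Lemma cx0 : cx 0 = 1. Proof. by rewrite /cx /= !mul1r. Qed.
Lemma cy0 : cy 0 = 0. Proof. by rewrite /cy /= !mul0r. Qed.
Lemma cd0 : cd 0 = 0. Proof. by rewrite /cd cx0 subrr mul0r. Qed.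

Lemma cos_cx (t : R) k : cos_coeff (2 * t) k = t ^+ k / k`!%:R * cx k.
Proof. rewrite /cos_coeff /cx /= exprMn -exprnP. ring. Qed.
Lemma sin_cy (t : R) k : sin_coeff (2 * t) k / 2 = t ^+ k / k`!%:R * cy k.
Proof. rewrite /sin_coeff /cy /= exprMn. ring. Qed.
Lemma cd_cos (t : R) k : t ^+ k / k`!%:R * cd k = ((k == 0)%:R - cos_coeff (2 * t) k) / 2.
Proof.
rewrite cos_cx /cd; case: k => [|k] /=.
  rewrite expr0 divr1 !mul1r. ring.
ring.
Qed.
End Coef.

Lemma half2 (R : realType) (H : lmodType R[i]) (v : H) : (2^-1 : R)%:C *: (v + v) = v.
Proof.
rewrite -mulr2n -(scaler_nat 2 v) scalerA -rcn -rcM mulVf ?rc1 ?scale1r //.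
by rewrite pnatr_eq0.
Qed.

Lemma halfinv (R : realType) (H : lmodType R[i]) (s w : H) :
  (2^-1 : R)%:C *: s = w -> s = w *+ 2.
Proof.
move=> <-; rewrite -(scaler_nat 2) scalerA -rcn -rcM mulfV ?rc1 ?scale1r //.
by rewrite pnatr_eq0.
Qed.

Lemma half_neq0 (R : realType) : ((2^-1 : R)%:C) != 0.
Proof.
by rewrite -rc0 (inj_eq (@complexI R)) invr_eq0 pnatr_eq0.
Qed.

Section Main2.
Variables (R : realType) (H : lmodType R[i]) (a u : H -> H).
Hypotheses (la : islin a) (lu : islin u).
Hypothesis F1 : forall x, a (a x) = a x.
Hypothesis F2 : forall x, a (u x) + u (a x) = u x.
Hypothesis F3 : forall x, u (u (u x)) = u x.
Hypothesis F4 : forall x, a (u (u x)) + u (u (a x)) = a x *+ 2.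

Lemma Gpow_comb k : Gpow a u k = comb a u (cx R k) (cy R k) (cd R k).
Proof.
elim: k => [|k IH]; apply: functional_extensionality => h /=.
  by rewrite /comb cx0 cy0 cd0 rc1 rc0 scale1r !scale0r !addr0.
by rewrite IH (Gcomb la lu F1 F2 F3 F4) cx_rec cy_rec cd_rec.
Qed.

Lemma partial_eq (t : R) n h :
  exp_partial a u t n h =
  (\sum_(k < n) (t ^+ k / k`!%:R * cx R k))%:C *: a h +
  (\sum_(k < n) (t ^+ k / k`!%:R * cy R k))%:C *: u h +
  (\sum_(k < n) (t ^+ k / k`!%:R * cd R k))%:C *: u (u h).
Proof.
rewrite /exp_partial; elim: n => [|n IH].
  by rewrite !big_ord0 rc0 !scale0r !addr0.
rewrite !big_ord_recr /= IH Gpow_comb /comb.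
have [L eL] : {L | L = nf (a h) (u h) (u (u h)) (a h)} by exists (nf (a h) (u h) (u (u h)) (a h)).
have e1 : a h = L 1 0 0 0 by rewrite eL -nf1.
have e2 : u h = L 0 1 0 0 by rewrite eL -nf2.
have e3 : u (u h) = L 0 0 1 0 by rewrite eL -nf3.
rewrite e3 e2 e1 eL.
rewrite ?(nfD, nfB, nfZ, nfN).
congr nf; rewrite ?(rcM, rcN, rcD, rcB, rcn); ring.
Qed.

End Main2.

Lemma sq_bound (R : realType) (p q M : R) : 0 <= p -> 0 <= q ->
  Num.sqrt p <= M * Num.sqrt q -> p <= M ^+ 2 * q.
Proof.
move=> p0 q0 h.
have s1 := sqrtr_ge0 p; have s2 := sqrtr_ge0 q.
rewrite -(sqr_sqrtr p0) -(sqr_sqrtr q0).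
move: h s1 s2; set x := Num.sqrt p; set y := Num.sqrt q => h s1 s2.
nra.
Qed.

Lemma fin_bound (R : realType) (c1 c2 c3 eta P Q S Z Ma2 Mu2 e2 : R) :
 0 <= P -> 0 <= Q -> 0 <= S -> 0 <= Z -> 0 <= Ma2 -> 0 <= Mu2 ->
 P <= Ma2 * Z -> Q <= Mu2 * Z -> S <= Mu2 * Mu2 * Z ->
 0 < eta -> c1 ^+ 2 <= eta -> c2 ^+ 2 <= eta -> c3 ^+ 2 <= eta ->
 eta * (12 * (Ma2 + Mu2 + Mu2 * Mu2 + 1)) <= e2 ->
 4 * (c1 ^+ 2 * P + c2 ^+ 2 * Q + c3 ^+ 2 * S) <= e2 * Z.
Proof.
move=> P0 Q0 S0 Z0 A0 B0 hP hQ hS et h1 h2 h3 he.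
have k1 : c1 ^+ 2 * P <= eta * (Ma2 * Z) by apply: ler_pM => //; exact: sqr_ge0.
have k2 : c2 ^+ 2 * Q <= eta * (Mu2 * Z) by apply: ler_pM => //; exact: sqr_ge0.
have k3 : c3 ^+ 2 * S <= eta * (Mu2 * Mu2 * Z) by apply: ler_pM => //; exact: sqr_ge0.
have k4 : 0 <= (e2 - eta * (12 * (Ma2 + Mu2 + Mu2 * Mu2 + 1))) * Z.
  by apply: mulr_ge0 => //; rewrite subr_ge0.
have et0 : 0 <= eta by exact: ltW.
have m1 : 0 <= eta * (Ma2 * Z) by apply: mulr_ge0 => //; apply: mulr_ge0.
have m2 : 0 <= eta * (Mu2 * Z) by apply: mulr_ge0 => //; apply: mulr_ge0.
have m3 : 0 <= eta * (Mu2 * Mu2 * Z) by apply: mulr_ge0 => //; apply: mulr_ge0 => //; apply: mulr_ge0.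
have m4 : 0 <= eta * Z by apply: mulr_ge0.
nra.
Qed.

Lemma diff3 (R : realType) (H : lmodType R[i]) (x y z : H) (A B C A' B' C' : R) :
  (A%:C *: x + B%:C *: y + C%:C *: z) - (A'%:C *: x + B'%:C *: y + C'%:C *: z) =
  (A - A')%:C *: x + (B - B')%:C *: y + (C - C')%:C *: z.
Proof.
have e1 := nf1 x y z x; have e2 := nf2 x y z x; have e3 := nf3 x y z x.
move: e1 e2 e3; set L := nf x y z x => e1 e2 e3.
have [L' eL] : {L' | L' = L} by exists L.
rewrite -eL in e1 e2 e3.
rewrite [in LHS]e3 [in LHS]e2 [in LHS]e1.
rewrite [in RHS]e3 [in RHS]e2 [in RHS]e1 eL /L.
rewrite ?(nfD, nfB, nfZ, nfN).
congr nf; rewrite ?(rcM, rcN, rcD, rcB, rcn); ring.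
Qed.

Lemma sqle (R : realType) (c eta : R) : 0 < eta -> eta <= 1 -> - eta < c < eta -> c ^+ 2 <= eta.
Proof. move=> h0 h1 /andP[h2 h3]; nra. Qed.

Lemma sqrt_fin (R : realType) (v z e : R) : 0 < e -> v <= e ^+ 2 * z ->
  Num.sqrt v <= e * Num.sqrt z.
Proof.
move=> e0 h; apply: le_trans (ler_wsqrtr h) _.
by rewrite sqrtrM ?sqr_ge0 // sqrtr_sqr gtr0_norm.
Qed.

Theorem theorem2p3 (R : realType) (H : lmodType R[i]) (ip : H -> H -> R[i])
  (hilb : is_hilbert ip) (a u : H -> H) :
  is_projection ip a -> (exists h : H, a h <> 0) ->
  is_tripotent ip u -> in_V_half ip a u ->
  jprod a (jprod u u) = a ->
  forall t : R,
    geodesic_at ip a u t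
      (op_add (op_add (op_scale (cos t ^+ 2) a)
                    (op_scale (2^-1 * sin (2 * t)) u))
            (op_scale (sin t ^+ 2) (jtriple u a u)))
    /\ in_subalg a u
      (op_add (op_add (op_scale (cos t ^+ 2) a)
                    (op_scale (2^-1 * sin (2 * t)) u))
            (op_scale (sin t ^+ 2) (jtriple u a u))).
Proof.
move=> [[[la [Ma hMa]] _] haa] _ [[[lu [Mu hMu]] _] huuu] [_ hau] hauu t.
case: hilb => iplin ipsym ippos _ _.
have la' : islin a := la.
have lu' : islin u := lu.
have F1 : forall x, a (a x) = a x.
  by move=> x; have := congr1 (fun f => f x) haa; rewrite /jprod /= half2.
have F2 : forall x, a (u x) + u (a x) = u x.
  move=> x; have := congr1 (fun f => f x) hau; rewrite /jprod /op_scale /=.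
  exact: (scalerI (half_neq0 R)).
have F3 : forall x, u (u (u x)) = u x.
  by move=> x; have := congr1 (fun f => f x) huuu; rewrite /jtriple /= half2.
have F4 : forall x, a (u (u x)) + u (u (a x)) = a x *+ 2.
  move=> x; have := congr1 (fun f => f x) hauu; rewrite /jprod /= !half2.
  exact: halfinv.
have uau : forall x, u (a (u x)) = u (u x) - a x.
  by move=> x; rewrite (ua F2) (auu lu' F2 F4).
have jt : jtriple u a u = op_add (jprod u u) (op_scale (-1) a).
  apply: functional_extensionality => x.
  by rewrite /jtriple /jprod /op_add /op_scale half2 half2 uau rcN rc1 scaleN1r.
split; last first.
  move=> S [cD [cZ cJ]] Sa Su; rewrite jt.
  apply: (cD); first by apply: (cD); apply: (cZ).
  by apply: (cZ); apply: (cD); [apply: (cJ) | apply: (cZ)].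
have Lt_eq : forall h,
  op_add (op_add (op_scale (cos t ^+ 2) a) (op_scale (2^-1 * sin (2 * t)) u))
         (op_scale (sin t ^+ 2) (jtriple u a u)) h =
  (cos t ^+ 2 - sin t ^+ 2)%:C *: a h + (2^-1 * sin (2 * t))%:C *: u h
  + (sin t ^+ 2)%:C *: u (u h).
  move=> h; rewrite /op_add /op_scale /jtriple half2 uau.
  have e1 := nf1 (a h) (u h) (u (u h)) (a h).
  have e2 := nf2 (a h) (u h) (u (u h)) (a h).
  have e3 := nf3 (a h) (u h) (u (u h)) (a h).
  move: e1 e2 e3; set L := nf (a h) (u h) (u (u h)) (a h) => e1 e2 e3.
  have [L' eL] : {L' | L' = L} by exists L.
  rewrite -eL in e1 e2 e3.
  rewrite [in LHS]e3 [in LHS]e2 [in LHS]e1.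
  rewrite [in RHS]e3 [in RHS]e2 [in RHS]e1 eL /L.
  rewrite ?(nfD, nfB, nfZ, nfN).
  congr nf; rewrite ?(rcM, rcN, rcD, rcB, rcn); ring.
have cos2 : cos (2 * t) = cos t ^+ 2 - sin t ^+ 2.
  rewrite mulr_natl cos_mulr2n sin2cos2 mulr2n; ring.
have sin2 : sin t ^+ 2 = (1 - cos (2 * t)) / 2.
  rewrite cos2 sin2cos2; by field.
have Ba : forall x, NN ip (a x) <= Ma ^+ 2 * NN ip x.
  move=> x; apply: sq_bound; [exact: (NN_ge0 ippos) | exact: (NN_ge0 ippos) | exact: hMa].
have Bu : forall x, NN ip (u x) <= Mu ^+ 2 * NN ip x.
  move=> x; apply: sq_bound; [exact: (NN_ge0 ippos) | exact: (NN_ge0 ippos) | exact: hMu].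
move=> e e0.
set K := Ma ^+ 2 + Mu ^+ 2 + Mu ^+ 2 * Mu ^+ 2 + 1.
have K0 : 0 < K.
  have := sqr_ge0 Ma; have := sqr_ge0 Mu => h1 h2.
  have h3 : 0 <= Mu ^+ 2 * Mu ^+ 2 by apply: mulr_ge0.
  rewrite /K; lra.
have D0 : 0 < 12 * K + e ^+ 2.
  have := sqr_ge0 e; lra.
set eta := e ^+ 2 / (12 * K + e ^+ 2).
have eta0 : 0 < eta by apply: divr_gt0 => //; apply: exprn_gt0.
have etaD : eta * (12 * K + e ^+ 2) = e ^+ 2 by rewrite /eta divfK // gt_eqF.
have eta1 : eta <= 1.
  have := sqr_ge0 e; nra.
have etaK : eta * (12 * K) <= e ^+ 2.
  have := sqr_ge0 e; nra.
have [N1 HN1] := cos_lim (2 * t) eta0.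
have [N2 HN2] := sin_lim (2 * t) eta0.
exists (maxn (maxn N1 N2) 1) => n Hn h.
have n1 : (N1 <= n)%N by lia.
have n2 : (N2 <= n)%N by lia.
have [n' En] : exists n', n = n'.+1 by exists n.-1; lia.
rewrite /hnorm (partial_eq la' lu' F1 F2 F3 F4) Lt_eq diff3.
have eA : \sum_(k < n) (t ^+ k / k`!%:R * cx R k) = \sum_(k < n) cos_coeff (2 * t) k.
  by apply: eq_bigr => k _; rewrite cos_cx.
have eB : \sum_(k < n) (t ^+ k / k`!%:R * cy R k) = (\sum_(k < n) sin_coeff (2 * t) k) / 2.
  by rewrite mulr_suml; apply: eq_bigr => k _; rewrite sin_cy.
have eD : \sum_(k < n) (t ^+ k / k`!%:R * cd R k) = (1 - \sum_(k < n) cos_coeff (2 * t) k) / 2.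
  rewrite (eq_bigr (fun k : 'I_n => (((k : nat) == 0%N)%:R - cos_coeff (2 * t) k) / 2)); last first.
    by move=> k _; rewrite cd_cos.
  rewrite -mulr_suml sumrB; congr ((_ - _) / _).
  rewrite En big_ord_recl /= big1 ?addr0 //.
rewrite eA eB eD.
have hc := HN1 n n1; have hs := HN2 n n2.
move: hc hs; rewrite !ltr_norml => /andP[hc1 hc2] /andP[hs1 hs2].
set C := \sum_(k < n) cos_coeff (2 * t) k in hc1 hc2 *.
set Sn := \sum_(k < n) sin_coeff (2 * t) k in hs1 hs2 *.
have q1 : (C - (cos t ^+ 2 - sin t ^+ 2)) ^+ 2 <= eta.
  apply: sqle => //; rewrite -cos2; apply/andP; split; lra.
have q2 : (Sn / 2 - 2^-1 * sin (2 * t)) ^+ 2 <= eta.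
  apply: sqle => //; apply/andP; split; lra.
have q3 : ((1 - C) / 2 - sin t ^+ 2) ^+ 2 <= eta.
  apply: sqle => //; rewrite sin2; apply/andP; split; lra.
apply: sqrt_fin => //.
apply: le_trans (NN3 iplin ipsym ippos _ _ _ _ _ _) _.
apply: (fin_bound (Ma2 := Ma ^+ 2) (Mu2 := Mu ^+ 2)).
- exact: (NN_ge0 ippos).
- exact: (NN_ge0 ippos).
- exact: (NN_ge0 ippos).
- exact: (NN_ge0 ippos).
- exact: sqr_ge0.
- exact: sqr_ge0.
- exact: Ba.
- exact: Bu.
- apply: le_trans (Bu _) _; rewrite -mulrA; apply: ler_wpM2l; [exact: sqr_ge0 | exact: Bu].
- exact: eta0.
- exact: q1.
- exact: q2.
- exact: q3.
- exact: etaK.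
Qed.
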